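(* Let $c_0,\dots,c_{N-1}$ be the vertices of a convex polygonal arc in the plane, let $L_i=\tfrac12(c_{i+1}-c_i)$ for $0\le i\le N-2$, and assume $[L_i,L_j]>0$ whenever $i<j$. For $0\le i\le j\le N-1$ define $$p(i,j)=\frac{c_i+c_j}{2},\qquad f(i,j)=\sum_{i\le k<l\le j-1}[L_k,L_l],\qquad q(i,j)=(p(i,j),f(i,j))\in\mathbb{R}^3.$$ Then $q$ is a discrete indefinite improper affine sphere, that is: (1) for all $1\le i<j\le N-2$ the five points $q(i,j),q(i+1,j),q(i-1,j),q(i,j-1),q(i,j+1)$ are coplanar; and (2) there is a fixed direction $\xi\in\mathbb{R}^3$ such that for all $0\le i<j\le N-2$ the vector $q(i,j)+q(i+1,j+1)-q(i+1,j)-q(i,j+1)$ is parallel to $\xi$.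
   Context: $[X,Y]$ denotes the determinant of the $2\times 2$ matrix with columns $X,Y$. A map $q:\mathbb{Z}^2\to\mathbb{R}^3$ is called a discrete indefinite improper affine sphere if (i) for each $(i,j)$ the points $q(i,j),q(i\pm1,j),q(i,j\pm1)$ are coplanar and (ii) there is a direction $\xi$ such that every $q(i,j)+q(i+1,j+1)-q(i+1,j)-q(i,j+1)$ is parallel to $\xi$. *)

(* Defs.v *)
From HB Require Import structures.
From mathcomp Require Import all_boot all_order all_algebra.
Set Implicit Arguments. Unset Strict Implicit. Unset Printing Implicit Defensive.
Import Order.TTheory GRing.Theory Num.Theory.
Local Open Scope ring_scope.

Section Defs.
Variable R : realFieldType.

Definition pt2 := (R * R)%type.
Definition pt3 := (R * R * R)%type.

Definition det2 (X Y : pt2) : R := X.1 * Y.2 - X.2 * Y.1.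

Definition add3 (u v : pt3) : pt3 := (u.1.1 + v.1.1, u.1.2 + v.1.2, u.2 + v.2).
Definition sub3 (u v : pt3) : pt3 := (u.1.1 - v.1.1, u.1.2 - v.1.2, u.2 - v.2).
Definition scale3 (t : R) (u : pt3) : pt3 := (t * u.1.1, t * u.1.2, t * u.2).
Definition dot3 (u v : pt3) : R := u.1.1 * v.1.1 + u.1.2 * v.1.2 + u.2 * v.2.

Definition coplanar (s : seq pt3) : Prop :=
  exists (n : pt3) (d : R), n <> (0, 0, 0) /\ forall x, x \in s -> dot3 n x = d.

Definition parallel (u xi : pt3) : Prop := exists t : R, u = scale3 t xi.

Definition Ledge (c : nat -> pt2) (i : nat) : pt2 :=
  (((c i.+1).1 - (c i).1) / 2, ((c i.+1).2 - (c i).2) / 2).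

Definition pmid (c : nat -> pt2) (i j : nat) : pt2 :=
  (((c i).1 + (c j).1) / 2, ((c i).2 + (c j).2) / 2).

Definition fsum (c : nat -> pt2) (i j : nat) : R :=
  \sum_(i <= k < j) \sum_(k.+1 <= l < j) det2 (Ledge c k) (Ledge c l).

Definition qmap (c : nat -> pt2) (i j : nat) : pt3 :=
  ((pmid c i j).1, (pmid c i j).2, fsum c i j).

End Defs.

(* Main.v *)
Require Import Defs.
From HB Require Import structures.
From mathcomp Require Import all_boot all_order all_algebra.
From mathcomp Require Import ring lra.
Import Order.TTheory GRing.Theory Num.Theory.
Local Open Scope ring_scope.

Section Aux.
Variable R : realFieldType.
Variable c : nat -> pt2 R.

Lemma telx i j : (i <= j)%N ->
  \sum_(i <= k < j) (Ledge c k).1 = ((c j).1 - (c i).1) / 2.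
Proof.
elim: j => [|j IH] Hij.
  by rewrite leqn0 in Hij; move/eqP: Hij => ->; rewrite big_geq // subrr mul0r.
rewrite leq_eqVlt in Hij; case/orP: Hij => [/eqP Heq|Hlt].
  by rewrite Heq big_geq // subrr mul0r.
rewrite ltnS in Hlt.
rewrite big_nat_recr //= IH //; rewrite /Ledge /=; (field; try by rewrite ?pnatr_eq0 ?oner_eq0 //=).
Qed.

Lemma tely i j : (i <= j)%N ->
  \sum_(i <= k < j) (Ledge c k).2 = ((c j).2 - (c i).2) / 2.
Proof.
elim: j => [|j IH] Hij.
  by rewrite leqn0 in Hij; move/eqP: Hij => ->; rewrite big_geq // subrr mul0r.
rewrite leq_eqVlt in Hij; case/orP: Hij => [/eqP Heq|Hlt].
  by rewrite Heq big_geq // subrr mul0r.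
rewrite ltnS in Hlt.
rewrite big_nat_recr //= IH //; rewrite /Ledge /=; (field; try by rewrite ?pnatr_eq0 ?oner_eq0 //=).
Qed.

Lemma detsumL i j Y : \sum_(i <= k < j) det2 (Ledge c k) Y =
  (\sum_(i <= k < j) (Ledge c k).1) * Y.2 - (\sum_(i <= k < j) (Ledge c k).2) * Y.1.
Proof.
rewrite /det2 sumrB !mulr_suml //.
Qed.

Lemma detsumR i j X : \sum_(i <= k < j) det2 X (Ledge c k) =
  X.1 * (\sum_(i <= k < j) (Ledge c k).2) - X.2 * (\sum_(i <= k < j) (Ledge c k).1).
Proof.
rewrite /det2 sumrB !mulr_sumr //.
Qed.

Lemma fsumA i j : (i <= j)%N ->
  fsum c i j.+1 = fsum c i j +
   (((c j).1 - (c i).1) / 2 * (Ledge c j).2 - ((c j).2 - (c i).2) / 2 * (Ledge c j).1).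
Proof.
move=> Hij; rewrite /fsum big_nat_recr //=.
rewrite [X in _ + X]big_geq // addr0.
rewrite (@eq_big_nat _ _ _ i j _
  (fun k => \sum_(k.+1 <= l < j) det2 (Ledge c k) (Ledge c l) + det2 (Ledge c k) (Ledge c j))); last first.
  by move=> k /andP[_ Hk]; rewrite big_nat_recr.
by rewrite big_split /= detsumL telx // tely.
Qed.

Lemma fsumB i j : (i < j)%N ->
  fsum c i j = fsum c i.+1 j +
   ((Ledge c i).1 * (((c j).2 - (c i.+1).2) / 2) - (Ledge c i).2 * (((c j).1 - (c i.+1).1) / 2)).
Proof.
move=> Hij; rewrite /fsum big_ltn // detsumR telx // tely // addrC; done.
Qed.

End Aux.

Theorem mainTheorem5 (R : realFieldType) (N : nat) (c : nat -> pt2 R) :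
  (forall i j : nat, (i < j)%N -> (j <= N - 2)%N ->
     0 < det2 (Ledge c i) (Ledge c j)) ->
  (forall i j : nat, (1 <= i)%N -> (i < j)%N -> (j <= N - 2)%N ->
     coplanar [:: qmap c i j; qmap c i.+1 j; qmap c i.-1 j;
                  qmap c i j.-1; qmap c i j.+1]) /\
  (exists xi : pt3 R, xi <> (0, 0, 0) /\
     forall i j : nat, (i < j)%N -> (j <= N - 2)%N ->
       parallel (sub3 (add3 (qmap c i j) (qmap c i.+1 j.+1))
                      (add3 (qmap c i.+1 j) (qmap c i j.+1))) xi).
Proof.
move=> _; split.
  move=> i j Hi Hij _.
  have Hj : (0 < j)%N by apply: leq_ltn_trans Hij.
  have Pi : i.-1.+1 = i by rewrite prednK.
  have Pj : j.-1.+1 = j by rewrite prednK.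
  pose n : pt3 R := (((c j).2 - (c i).2) / 2, - (((c j).1 - (c i).1) / 2), 1).
  exists n, (dot3 n (qmap c i j)); split.
    by case=> _ _ /eqP; rewrite oner_eq0.
  have E1 := @fsumB R c _ _ Hij.
  have E2 := @fsumB R c i.-1 j. rewrite Pi in E2.
  have E2' := E2 (ltnW Hij).
  have E3 := @fsumA R c i j (ltnW Hij).
  have E4 := @fsumA R c i j.-1. rewrite Pj in E4.
  have E4' := E4 (ltac:(by rewrite -ltnS Pj)).
  move=> x; rewrite !inE => /orP[/eqP->|/orP[/eqP->|/orP[/eqP->|/orP[/eqP->|/eqP->]]]];
  rewrite /dot3 /qmap /pmid /= ?E2' ?E3.
  all: try reflexivity.
  1: rewrite E1.
  3: rewrite E4'.
  1-4: rewrite /Ledge ?Pi ?Pj /=.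
  1-4: (field; try by rewrite ?pnatr_eq0 ?oner_eq0 //=).
exists (0, 0, 1); split; first by case=> /eqP; rewrite oner_eq0.
move=> i j Hij _.
exists (- det2 (Ledge c i) (Ledge c j)).
have E1 := @fsumB R c _ _ Hij.
have E3 := @fsumA R c i j (ltnW Hij).
rewrite /sub3 /add3 /scale3 /qmap /pmid /= E3 E1 (@fsumA R c i.+1 j Hij).
rewrite /det2 /Ledge /=; congr (_, _, _); (field; try by rewrite ?pnatr_eq0 ?oner_eq0 //=).
Qed.
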